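(* Let $a$, $b$ and $d>1$ be pairwise coprime odd positive integers and let $\beta\geq 2$ be an integer. Then there exists a positive integer $k$ with $2^\beta d\mid(a^k+b^k)$ if and only if $2^\beta\mid(a+b)$ and $2\,\|\,\operatorname{ord}_p(\frac ab)$ for every prime $p$ dividing $d$. In this case, $\operatorname{ord}_{2^\beta}(\frac ab)=2$ and $2\,\|\,\operatorname{ord}_{2^\beta d}(\frac ab)$.
   Context: For $n$ coprime to $ab$, $\operatorname{ord}_n(\frac ab)$ denotes the multiplicative order of $ab^{-1}$ modulo $n$. $2\,\|\,m$ means $2\mid m$ and $4\nmid m$. *)

(* Defs.v *)
From mathcomp Require Import all_boot.
Set Implicit Arguments. Unset Strict Implicit. Unset Printing Implicit Defensive.

Definition mod_inv (n b : nat) : nat :=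
  find (fun x => b * x %% n == 1 %% n) (iota 0 n).

(* Multiplicative order of x modulo n: the least k >= 1 with x^k = 1 (mod n).
   The search runs over 1..n, which suffices whenever x is a unit mod n
   (the order divides totient n <= n). *)
Definition ord_mod (n x : nat) : nat :=
  (find (fun k => x ^ k.+1 %% n == 1 %% n) (iota 0 n)).+1.

Definition ordq (n a b : nat) : nat := ord_mod n (a * mod_inv n b).

Definition exactly2 (m : nat) : bool := (2 %| m) && ~~ (4 %| m).

(* Main.v *)
Require Import Defs.
From mathcomp Require Import all_boot.
From mathcomp Require Import all_algebra cyclic.
From mathcomp Require Import ring zify.

Lemma totient_leq n : totient n <= n.
Proof.
rewrite totient_count_coprime.
apply: leq_trans (_ : _ <= \sum_(0 <= d < n) 1) _.
  by apply: leq_sum => i _; exact: leq_b1.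
by rewrite sum_nat_const_nat muln1 subn0.
Qed.

Lemma modinvP n b : 0 < n -> coprime b n -> b * mod_inv n b = 1 %[mod n].
Proof.
move=> n0 cb.
set P := (fun x => b * x %% n == 1 %% n).
have ex : has P (iota 0 n).
  apply/hasP; exists (b ^ (totient n).-1 %% n).
    by rewrite mem_iota add0n ltn_mod n0.
  rewrite /P modnMmr -expnS prednK ?totient_gt0 //.
  by apply/eqP; apply: Euler_exp_totient.
have := nth_find 0 ex; rewrite /mod_inv -/P.
rewrite nth_iota ?add0n; first by move/eqP.
by rewrite -{2}(size_iota 0 n) -has_find.
Qed.

Lemma ordP n x : 0 < n -> coprime x n ->
  [/\ 0 < ord_mod n x, x ^ ord_mod n x = 1 %[mod n] &
      forall j, x ^ j = 1 %[mod n] -> ord_mod n x %| j].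
Proof.
move=> n0 cx.
set P := (fun k => x ^ k.+1 %% n == 1 %% n).
have ex : has P (iota 0 n).
  apply/hasP; exists (totient n).-1.
    rewrite mem_iota add0n; have := totient_leq n; have := totient_gt0 n.
    rewrite n0; lia.
  rewrite /P prednK ?totient_gt0 //.
  by apply/eqP; apply: Euler_exp_totient.
have hf : find P (iota 0 n) < n by rewrite -{2}(size_iota 0 n) -has_find.
have Ht : x ^ ord_mod n x = 1 %[mod n].
  have := nth_find 0 ex; rewrite /ord_mod -/P.
  by rewrite nth_iota ?add0n // => /eqP.
have Hmin : forall r, 0 < r < ord_mod n x -> x ^ r != 1 %[mod n].
  move=> r /andP[r0 rt].
  have := @before_find _ 0 P (iota 0 n) r.-1.
  rewrite /ord_mod -/P in rt.
  rewrite nth_iota; last by lia.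
  rewrite add0n /P prednK // => H; rewrite H //; lia.
split => // j Hj.
have t0 : 0 < ord_mod n x by [].
have [H|r0] := posnP (j %% ord_mod n x); first by rewrite /dvdn H.
have := Hmin (j %% ord_mod n x); rewrite r0 ltn_mod t0 => /(_ isT) /eqP; case.
move: Hj; rewrite {1}(divn_eq j (ord_mod n x)) expnD (mulnC _ (ord_mod n x)) expnM.
by rewrite -modnMml -modnXm Ht modnXm exp1n modnMml mul1n.
Qed.

Lemma sq_neg1 n x k : 0 < x -> n %| x ^ k + 1 -> x ^ (k * 2) = 1 %[mod n].
Proof.
move=> x0 H; apply/eqP; rewrite eqn_mod_dvd; last by rewrite expn_gt0 x0.
by rewrite expnM -{2}(exp1n 2) subn_sqr dvdn_mull.
Qed.

Lemma ord_exactly2 n x k : 2 < n -> coprime x n -> n %| x ^ k + 1 -> odd k ->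
  exactly2 (ord_mod n x).
Proof.
move=> n2 cx H ok.
have x0 : 0 < x.
  case: x cx H => // ; rewrite /coprime gcd0n => /eqP E; lia.
have [t0 Ht Hd] := @ordP n x (ltnW (ltnW n2)) cx.
have h2k := Hd _ (@sq_neg1 n x k x0 H).
have hk : ~~ (ord_mod n x %| k).
  apply/negP => /dvdnP [q E]; move: H; rewrite E mulnC expnM.
  have : (x ^ ord_mod n x) ^ q + 1 = 1 + 1 %[mod n].
    by rewrite -modnDml -modnXm Ht modnXm exp1n modnDml.
  rewrite /dvdn => -> ; rewrite modn_small //.
rewrite /exactly2; apply/andP; split.
  rewrite dvdn2; apply/negP => ot; move: hk; rewrite -(Gauss_dvdl _ (_ : coprime _ 2)) ?h2k //.
  by rewrite coprimen2.
apply/negP => H4; have : 2 * 2 %| k * 2 by apply: dvdn_trans H4 h2k.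
by rewrite dvdn_pmul2r // dvdn2 ok.
Qed.

Lemma conv n a b k : 0 < n -> coprime b n ->
  ((a * mod_inv n b) ^ k + 1) * b ^ k = a ^ k + b ^ k %[mod n].
Proof.
move=> n0 cb; rewrite mulnDl mul1n expnMn -mulnA -expnMn.
by rewrite -modnDml -modnMmr -modnXm (mulnC _ b) modinvP // modnXm exp1n modnMmr muln1 modnDml.
Qed.

Lemma conv_dvd n a b k : 0 < n -> coprime b n ->
  (n %| (a * mod_inv n b) ^ k + 1) = (n %| a ^ k + b ^ k).
Proof.
move=> n0 cb.
rewrite -(Gauss_dvdl _ (_ : coprime n (b ^ k))); last by rewrite coprime_sym coprimeXl.
by rewrite /dvdn conv.
Qed.

Lemma cop_c n a b : 0 < n -> coprime a n -> coprime b n -> coprime (a * mod_inv n b) n.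
Proof.
move=> n0 ca cb; rewrite coprimeMl ca /=.
have : coprime (b * mod_inv n b) n by rewrite -coprime_modl modinvP // coprime_modl coprime1n.
by rewrite coprimeMl => /andP[].
Qed.

Section IntId.
Import GRing.Theory Num.Theory.
Local Open Scope ring_scope.
Lemma pow_id (R : comNzRingType) (s Y : R) (j : nat) : exists T : R,
  (s - Y) ^+ j.+1 = (- Y) ^+ j.+1 + (s * (- Y) ^+ j) *+ j.+1 + s ^+ 2 * T.
Proof.
elim: j => [|j [T IH]].
  exists 0; rewrite !expr1 expr0 mulr1 mulr0 addr0 mulr1n; ring.
exists ((- Y) ^+ j *+ j.+1 + (s - Y) * T).
rewrite exprS IH (exprS (-Y) j.+1) (exprS (-Y) j).
move: ((- Y) ^+ j) => P. 
rewrite [_ *+ j.+2]mulrSr.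
rewrite -mulr_natl -(mulr_natl P) -(mulr_natl (s * (-Y * P))).
move: (j.+1)%:R => m. ring.
Qed.

Lemma PoszX (X q : nat) : Posz (X ^ q)%N = (Posz X) ^+ q.
Proof. by rewrite -natz natrX natz. Qed.

Lemma sum_id (X Y j : nat) : ~~ odd j -> exists T : int,
  Posz (X ^ j.+1 + Y ^ j.+1)%N =
  (Posz (X + Y)%N * (Posz Y) ^+ j) *+ j.+1 + (Posz (X + Y)%N) ^+ 2 * T.
Proof.
Timeout 10 (move=> ej; have [T E] := @pow_id int (Posz (X + Y)%N) (Posz Y) j).
Timeout 10 (exists T; rewrite PoszD !PoszX -[Posz X](addrK (Posz Y)) -PoszD E).
have s1 : (-1) ^+ j.+1 = -1 :> int by rewrite -signr_odd /= (negbTE ej) expr1.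
have s0 : (-1) ^+ j = 1 :> int by rewrite -signr_odd (negbTE ej) expr0.
Timeout 10 (rewrite (exprNn (Posz Y) j.+1) (exprNn (Posz Y) j) s1 s0 mul1r mulN1r).
by rewrite addrC !addrA addrN add0r.
Qed.
End IntId.

Section IntUse.
Import GRing.Theory Num.Theory.

Lemma sumpow2 X Y q : odd q -> q %| X + Y -> q * (X + Y) %| X ^ q + Y ^ q.
Proof.
case: q => // j oq hq; have ej : ~~ odd j by [].
have [T E] := @sum_id X Y j ej.
have -> : (j.+1 * (X + Y) %| X ^ j.+1 + Y ^ j.+1) =
   (Posz (j.+1 * (X + Y))%N %| Posz (X ^ j.+1 + Y ^ j.+1)%N)%Z by [].
rewrite E; apply: rpredD.
  rewrite -mulr_natl PoszM mulrA; apply: dvdz_mulr.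
  by rewrite natz.
by rewrite PoszM; apply: dvdz_mulr; rewrite expr2; apply: dvdz_mul.
Qed.

Lemma sumpow X Y q : odd q -> X + Y %| X ^ q + Y ^ q.
Proof.
case: q => // j oq; have ej : ~~ odd j by [].
have [T E] := @sum_id X Y j ej.
have -> : (X + Y %| X ^ j.+1 + Y ^ j.+1) =
   (Posz (X + Y)%N %| Posz (X ^ j.+1 + Y ^ j.+1)%N)%Z by [].
rewrite E; apply: rpredD.
  by rewrite -mulr_natl mulrCA; apply: dvdz_mulr.
by rewrite expr2 -mulrA; apply: dvdz_mulr.
Qed.

End IntUse.

Lemma dvd_pow_all X Y n : odd n -> (forall p, prime p -> p %| n -> p %| X + Y) ->
  n %| X ^ n + Y ^ n.
Proof.
elim/ltn_ind: n => n IH on Hp.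
case: (leqP n 1) => [n1|n1].
  have -> : n = 1 by move: on n1; case: (n) => [|[|]].
  exact: dvd1n.
have pp := pdiv_prime n1; have pd := pdiv_dvd n.
set p := pdiv n in pp pd.
set n' := n %/ p.
have En : n = n' * p by rewrite divnK.
have [op on'] : odd n' /\ odd p by move: on; rewrite En oddM => /andP[].
have n'lt : n' < n by rewrite ltn_Pdiv ?prime_gt1 //; lia.
have H' : n' %| X ^ n' + Y ^ n'.
  apply: IH => // q qp qd; apply: Hp => //; apply: dvdn_trans qd _.
  by rewrite En dvdn_mulr.
have hp : p %| X ^ n' + Y ^ n' := dvdn_trans (Hp p pp pd) (sumpow X Y n' op).
have := sumpow2 (X ^ n') (Y ^ n') p on' hp.
rewrite -!expnM -En => H2.
apply: dvdn_trans H2; rewrite {1}En mulnC; exact: dvdn_mul.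
Qed.

Lemma odd_sq4 u v : odd u -> odd v -> ~~ (4 %| u ^ 2 + v ^ 2).
Proof.
move=> ou ov; have := odd_double_half u; have := odd_double_half v.
rewrite ou ov; move: (u./2) (v./2) => x y; nia.
Qed.

Lemma ord_dvd_pow n x j : 0 < n -> coprime x n -> ord_mod n x %| j -> x ^ j = 1 %[mod n].
Proof.
move=> n0 cx /dvdnP [q ->]; have [_ Ht _] := @ordP n x n0 cx.
by rewrite mulnC expnM -modnXm Ht modnXm exp1n.
Qed.

Lemma pos_of_cop x n : 1 < n -> coprime x n -> 0 < x.
Proof. by case: x => // ; rewrite /coprime gcd0n => n1 /eqP E; lia. Qed.

Lemma odd_half k : odd k -> k = 2 * k./2 + 1.
Proof. move=> ok; have := odd_double_half k; rewrite ok; lia. Qed.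

Lemma even_half t : 2 %| t -> t = t./2 * 2.
Proof. move=> e; have := odd_double_half t; move: e; rewrite dvdn2; lia. Qed.

Lemma half_odd t : 2 %| t -> ~~ (4 %| t) -> odd t./2.
Proof. move=> e2 e4; have := odd_double_half t; have := odd_double_half t./2; move: e2 e4; lia. Qed.

Lemma two_of t : 0 < t -> t %| 1 * 2 -> 2 %| t -> t = 2.
Proof. move=> t0 /(dvdn_leq (isT : 0 < 1 * 2)); rewrite dvdn2; lia. Qed.

Theorem proposition2p7 (a b d beta : nat) :
  0 < a -> 0 < b -> odd a -> odd b -> odd d -> 1 < d ->
  coprime a b -> coprime a d -> coprime b d -> 2 <= beta ->
  ((exists k, 0 < k /\ 2 ^ beta * d %| a ^ k + b ^ k) <->
     (2 ^ beta %| a + b /\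
      forall p, prime p -> p %| d -> exactly2 (ordq p a b)))
  /\
  ((exists k, 0 < k /\ 2 ^ beta * d %| a ^ k + b ^ k) ->
     ordq (2 ^ beta) a b = 2 /\ exactly2 (ordq (2 ^ beta * d) a b)).
Proof.
move=> a0 b0 oa ob od d1 cab cad cbd b2.
have M4 : 4 <= 2 ^ beta by rewrite -[4]/(2 ^ 2) leq_exp2l.
have M0 : 0 < 2 ^ beta by rewrite expn_gt0.
have N2 : 2 < 2 ^ beta * d by move: (2 ^ beta) M4 => x; nia.
have c2a : coprime a (2 ^ beta) by rewrite coprime_pexpr ?coprimen2 //; lia.
have c2b : coprime b (2 ^ beta) by rewrite coprime_pexpr ?coprimen2 //; lia.
have cNa : coprime a (2 ^ beta * d) by rewrite coprimeMr c2a cad.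
have cNb : coprime b (2 ^ beta * d) by rewrite coprimeMr c2b cbd.
have fwd : forall k, 0 < k -> 2 ^ beta * d %| a ^ k + b ^ k ->
   [/\ odd k, 2 ^ beta %| a + b &
       forall p, prime p -> p %| d -> exactly2 (ordq p a b)].
  move=> k k0 H.
  have H2 : 2 ^ beta %| a ^ k + b ^ k := dvdn_trans (dvdn_mulr d (dvdnn _)) H.
  have Hd : d %| a ^ k + b ^ k := dvdn_trans (dvdn_mull _ (dvdnn _)) H.
  have ok : odd k.
    apply/negPn/negP => ek.
    have Ek : k = k./2 * 2 by have := odd_double_half k; rewrite (negbTE ek); lia.
    have H4 : 4 %| a ^ k + b ^ k.
      by apply: dvdn_trans H2; rewrite -[4]/(2 ^ 2) dvdn_exp2l.
    move: H4; rewrite Ek !expnM; apply/negP; apply: odd_sq4; by rewrite oddX ?oa ?ob orbT.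
  split => //.
    set M := 2 ^ beta in M4 M0 c2a c2b H2 *.
    set c := a * mod_inv M b.
    have hc : M %| c ^ k + 1 by rewrite conv_dvd.
    have cc : coprime c M by apply: cop_c.
    have c0 : 0 < c by apply: (@pos_of_cop c M) => //; lia.
    have [t0 Ht Hdv] := @ordP M c M0 cc.
    have tk : ord_mod M c %| k * 2 := Hdv _ (@sq_neg1 M c k c0 hc).
    have tM : ord_mod M c %| 2 ^ beta.-1.
      have := Hdv _ (Euler_exp_totient cc).
      have be0 : 0 < beta by lia.
      by rewrite /M totient_pfactor // mul1n.
    have t2 : ord_mod M c %| 2.
      move: tM => /(dvdn_pfactor _ _ (isT : prime 2)) [i ib Ei].
      rewrite Ei -{2}(expn1 2) dvdn_exp2l //.
      case: (leqP i 1) => // i2; exfalso.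
      have : 2 * 2 %| k * 2.
        apply: dvdn_trans tk; rewrite Ei -[2 * 2]/(2 ^ 2) dvdn_exp2l //.
      by rewrite dvdn_pmul2r // dvdn2 ok.
    have c2 : c ^ 2 = 1 %[mod M] by apply: ord_dvd_pow.
    have Ek : k = 2 * k./2 + 1 by apply: odd_half.
    have ck : c ^ k = c %[mod M].
      by rewrite Ek expnD expnM -modnMml -modnXm c2 modnXm exp1n modnMml mul1n expn1.
    have : M %| c ^ 1 + 1 by rewrite expn1 /dvdn -modnDml -ck modnDml.
    by rewrite conv_dvd // !expn1.
  move=> p pp pd.
  have p2 : 2 < p.
    rewrite ltn_neqAle prime_gt1 // andbT; apply/eqP => E.
    by move: pd; rewrite -E dvdn2 od.
  have cpa : coprime a p by apply: coprime_dvdr pd cad.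
  have cpb : coprime b p by apply: coprime_dvdr pd cbd.
  have p0 := prime_gt0 pp.
  rewrite /ordq; apply: (@ord_exactly2 p _ k) => //.
    by apply: cop_c.
  by rewrite conv_dvd //; apply: dvdn_trans Hd.
split; last first.
  case=> k [k0 H]; have [ok Hab _] := fwd k k0 H; split.
    set M := 2 ^ beta in M4 M0 c2a c2b Hab *.
    rewrite /ordq; set c := a * mod_inv M b.
    have cc : coprime c M by apply: cop_c.
    have c0 : 0 < c by apply: (@pos_of_cop c M) => //; lia.
    have hc : M %| c ^ 1 + 1 by rewrite conv_dvd // !expn1.
    have [t0 Ht Hdv] := @ordP M c M0 cc.
    have t2 : ord_mod M c %| 1 * 2 := Hdv _ (@sq_neg1 M c 1 c0 hc).
    have := @ord_exactly2 M c 1 (leq_trans (isT : 2 < 4) M4) cc hc isT.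
    rewrite /exactly2 => /andP [e2 _].
    exact: two_of.
  have N0 : 0 < 2 ^ beta * d by apply: ltnW (ltnW N2).
  rewrite /ordq; apply: (@ord_exactly2 _ _ k) => //.
    by apply: cop_c.
  by rewrite conv_dvd.
split.
  by case=> k [k0 H]; have [_ ? ?] := fwd k k0 H.
case=> Hab Hp.
set M := \prod_(p <- primes d) (ordq p a b)./2.
have Hm : forall p, prime p -> p %| d ->
    odd (ordq p a b)./2 /\ p %| a ^ (ordq p a b)./2 + b ^ (ordq p a b)./2.
  move=> p pp pd.
  have := Hp p pp pd; rewrite /exactly2 => /andP [e2 e4].
  have om : odd (ordq p a b)./2 by apply: half_odd.
  split => //.
  have p1 := prime_gt1 pp.
  have cpa : coprime a p by apply: coprime_dvdr pd cad.
  have cpb : coprime b p by apply: coprime_dvdr pd cbd.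
  move: om e2 e4; rewrite /ordq; set c := a * mod_inv p b => om e2 e4.
  have p0 := prime_gt0 pp.
  have cc : coprime c p by apply: cop_c.
  have c0 : 0 < c by apply: (@pos_of_cop c p).
  have [t0 Ht Hdv] := @ordP p c (ltnW p1) cc.
  set m := (ord_mod p c)./2 in om *.
  have Et : ord_mod p c = m * 2.
    by apply: even_half.
  have ncm : ~~ (p %| c ^ m - 1).
    apply/negP; rewrite -eqn_mod_dvd ?expn_gt0 ?c0 // => /eqP /Hdv.
    have m0 : 0 < m by move: t0; rewrite Et muln_gt0 andbT.
    move/(dvdn_leq m0); rewrite Et.
    by have := ltn_Pmulr (isT : 1 < 2) m0; rewrite ltnNge => /negP.
  have : p %| (c ^ m) ^ 2 - 1 ^ 2.
    rewrite exp1n -expnM -Et -eqn_mod_dvd ?expn_gt0 ?c0 //; exact/eqP.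
  rewrite subn_sqr Euclid_dvdM // (negbTE ncm) /= => hc.
  by move: hc; rewrite conv_dvd.
have oM : odd M.
  rewrite /M big_seq; apply: (big_ind (fun x => odd x)) => // [x y ox oy | p].
    by rewrite oddM ox oy.
  by rewrite mem_primes => /and3P [pp _ pd]; case: (Hm p pp pd).
have Hpd : forall p, prime p -> p %| d -> p %| a ^ M + b ^ M.
  move=> p pp pd; have [om hm] := Hm p pp pd.
  have dm : (ordq p a b)./2 %| M.
    by rewrite /M (big_rem p) ?dvdn_mulr // mem_primes pp pd (ltnW d1).
  have EM : M = (ordq p a b)./2 * (M %/ (ordq p a b)./2) by rewrite mulnC divnK.
  have oq : odd (M %/ (ordq p a b)./2) by move: oM; rewrite {1}EM oddM => /andP[].
  rewrite EM !expnM; apply: dvdn_trans hm _; exact: sumpow.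
exists (M * d); split.
  by rewrite muln_gt0 (odd_gt0 oM) (ltnW d1).
have be0 : 0 < beta by apply: leq_trans b2.
rewrite Gauss_dvd; last by rewrite coprime_pexpl ?coprime2n.
apply/andP; split.
  by apply: dvdn_trans Hab (sumpow a b (M * d) _); rewrite oddM oM od.
by have := dvd_pow_all (a ^ M) (b ^ M) d od Hpd; rewrite -!expnM.
Qed.
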